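(* Let $(a_n)_{n\ge0}$ be nonzero complex numbers with $|a_0|\ge|a_1|\ge\cdots$ and $\sum_n|a_n|^2<\infty$, and let $T$ be the weighted shift $Te_n=a_ne_{n+1}$. Let $H_1$ be the closed linear span of $\{e_n:n\ge1\}$. Then: (1) the map $\mathcal F:\mathcal A_T\to H_1$, $\mathcal F(S)=Se_0$, is a linear homeomorphism onto $H_1$, and $\mathcal J\mapsto\mathcal F(\mathcal J)$ is a lattice isomorphism from the lattice of closed ideals of $\mathcal A_T$ onto the lattice of closed $T$-invariant subspaces of $H_1$; (2) the map $\tilde{\mathcal F}:\tilde{\mathcal A}_T\to H$, $\tilde{\mathcal F}(S)=Se_0$, is a linear homeomorphism onto $H$, and $\mathcal J\mapsto\tilde{\mathcal F}(\mathcal J)$ is a lattice isomorphism from the lattice of closed ideals of $\tilde{\mathcal A}_T$ onto the lattice of closed $T$-invariant subspaces of $H$.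
   Context: $H$ is a complex Hilbert space with orthonormal basis $\{e_n\}_{n\ge0}$, $Te_n=a_ne_{n+1}$, $\mathcal A_T$ is the operator-norm closure in $\mathcal B(H)$ of the polynomials $p(T)$ with $p(0)=0$, and $\tilde{\mathcal A}_T=\mathcal A_T+\mathbb C I$ is its unitization inside $\mathcal B(H)$ (the norm closure of all polynomials in $T$). *)

(* Defs.v *)
From HB Require Import structures.
From mathcomp Require Import all_boot all_order all_algebra.
From mathcomp Require Import all_classical all_reals all_analysis.
From mathcomp Require Import complex.
Set Implicit Arguments.
Unset Strict Implicit.
Unset Printing Implicit Defensive.
Import Order.TTheory GRing.Theory Num.Theory.
Import numFieldNormedType.Exports.
Local Open Scope ring_scope.
Local Open Scope classical_set_scope.

Section Defs.
Variable R : realType.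
Local Notation C := R[i].

Definition cabs2 (z : C) : R := @complex.Re R z ^+ 2 + @complex.Im R z ^+ 2.
Definition cabs (z : C) : R := Num.sqrt (cabs2 z).

Definition l2 (x : nat -> C) : Prop :=
  cvgn (series (fun n => cabs2 (x n)) : R ^nat).
Definition l2norm (x : nat -> C) : R :=
  Num.sqrt (limn (series (fun n => cabs2 (x n)) : R ^nat)).
Definition vsub (x y : nat -> C) : nat -> C := fun n => x n - y n.
Definition e_ (k : nat) : nat -> C := fun n => (n == k)%:R.

Definition span_e (P : pred nat) : set (nat -> C) :=
  [set y | exists (N : nat) (c : nat -> C),
      y = (fun n => \sum_(k < N | P k) c k * e_ k n)].
Definition clspan_e (P : pred nat) : set (nat -> C) :=
  [set x | l2 x /\ forall eps : R, 0 < eps ->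
      exists y, span_e P y /\ l2norm (vsub x y) < eps].
Definition H1 : set (nat -> C) := clspan_e (fun k => (0 < k)%N).

(* Operators.  An element of B(H) is represented by its unique
   representative function that is zero outside of l^2. *)
Definition Op := (nat -> C) -> (nat -> C).
Definition bounded_op (A : Op) : Prop :=
  [/\ forall x, l2 x -> l2 (A x),
      forall x, ~ l2 x -> A x = (fun _ => 0),
      forall (c : C) x y, l2 x -> l2 y ->
        A (fun n => c * x n + y n) = (fun n => c * A x n + A y n) &
      exists M : R, forall x, l2 x -> l2norm (A x) <= M * l2norm x].
Definition opnorm (A : Op) : R :=
  sup [set l2norm (A x) | x in [set x | l2 x /\ l2norm x <= 1]].
Definition opsub (A B : Op) : Op := fun x => vsub (A x) (B x).
Definition opdist (A B : Op) : R := opnorm (opsub A B).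

Definition shift (a : nat -> C) : Op := fun x n =>
  if `[< l2 x >] then (match n with 0 => 0 | k.+1 => a k * x k end) else 0.
Definition polyop (a : nat -> C) (p : {poly C}) : Op := fun x n =>
  if `[< l2 x >] then \sum_(i < size p) p`_i * iter i (shift a) x n else 0.

Definition AT (a : nat -> C) : set Op :=
  [set S | bounded_op S /\ forall eps : R, 0 < eps ->
     exists p : {poly C}, p`_0 = 0 /\ opdist S (polyop a p) < eps].
(* unitization: operator-norm closure of all polynomials in T *)
Definition ATu (a : nat -> C) : set Op :=
  [set S | bounded_op S /\ forall eps : R, 0 < eps ->
     exists p : {poly C}, opdist S (polyop a p) < eps].

Definition closed_ideal (A J : set Op) : Prop :=
  [/\ J `<=` A,
      J (fun _ _ => 0),
      (forall S S', J S -> J S' -> J (fun x n => S x n + S' x n)) /\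
      (forall (c : C) S, J S -> J (fun x n => c * S x n)),
      forall S Q, A S -> J Q -> J (S \o Q) /\ J (Q \o S) &
      forall S, A S -> (forall eps : R, 0 < eps ->
                          exists Q, J Q /\ opdist S Q < eps) -> J S].

Definition closed_inv_subspace (a : nat -> C) (K M : set (nat -> C)) : Prop :=
  [/\ M `<=` K,
      M (fun _ => 0),
      (forall x y, M x -> M y -> M (fun n => x n + y n)) /\
      (forall (c : C) x, M x -> M (fun n => c * x n)),
      forall x, M x -> M (shift a x) &
      forall x, l2 x -> (forall eps : R, 0 < eps ->
                          exists y, M y /\ l2norm (vsub x y) < eps) -> M x].

Definition lin_homeo (A : set Op) (K : set (nat -> C)) (F : Op -> nat -> C) :=
  [/\ forall (c : C) S S', A S -> A S' ->
        F (fun x n => c * S x n + S' x n) = (fun n => c * F S n + F S' n),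
      (forall S, A S -> K (F S)) /\
      (forall x, K x -> exists S, A S /\ F S = x),
      forall S S', A S -> A S' -> F S = F S' -> S = S',
      (forall S (eps : R), A S -> 0 < eps -> exists2 delta : R, 0 < delta &
        forall S', A S' -> opdist S S' < delta -> l2norm (vsub (F S) (F S')) < eps) &
      (forall S (eps : R), A S -> 0 < eps -> exists2 delta : R, 0 < delta &
        forall S', A S' -> l2norm (vsub (F S) (F S')) < delta -> opdist S S' < eps)].

(* J |-> F(J) is a lattice (= order) isomorphism between the lattices
   {J | P J} and {M | Q M}, both ordered by inclusion *)
Definition lattice_iso (P : set Op -> Prop) (Q : set (nat -> C) -> Prop)
    (F : Op -> nat -> C) :=
  [/\ forall J, P J -> Q (F @` J),
      forall M, Q M -> exists J, P J /\ F @` J = M &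
      forall J1 J2, P J1 -> P J2 -> (J1 `<=` J2 <-> F @` J1 `<=` F @` J2)].

Definition Fe (S : Op) : nat -> C := S (e_ 0).

End Defs.

(* Main.v *)
Require Import Defs.
From HB Require Import structures.
From mathcomp Require Import all_boot all_order all_algebra.
From mathcomp Require Import all_classical all_reals all_analysis.
From mathcomp Require Import complex.
From mathcomp Require Import ring lra.
Import Order.TTheory GRing.Theory Num.Theory.
Import numFieldNormedType.Exports.
Local Open Scope ring_scope.
Local Open Scope classical_set_scope.

Section CS.
Variable R : realFieldType.
Lemma cs_step (A B W q : R) : 0 <= W -> 0 <= B -> A ^+ 2 <= W * B ->
  2 * A * q <= W * q ^+ 2 + B.
Proof.
move=> W0 B0 h.
have [W0'|Wn0] := eqVneq W 0.
  have A0 : A ^+ 2 <= 0 by rewrite W0' mul0r in h.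
  have : A = 0 by apply/eqP; rewrite -sqrf_eq0 eq_le A0 sqr_ge0.
  move=> ->; rewrite W0'; lra.
have Wp : 0 < W by rewrite lt_def Wn0.
have : 0 <= (W * q - A) ^+ 2 by exact: sqr_ge0.
move=> hs.
have : W * (2 * A * q) <= W * (W * q ^+ 2 + B) by nra.
by rewrite ler_pM2l.
Qed.
Lemma wcs (m : nat) (p w : nat -> R) : (forall k, 0 < w k) ->
  (\sum_(k < m) p k) ^+ 2 <= (\sum_(k < m) w k) * (\sum_(k < m) p k ^+ 2 / w k).
Proof.
move=> wp; elim: m => [|m IH]; first by rewrite !big_ord0 mul0r expr0n.
rewrite !big_ord_recr /=.
set A := \sum_(i < m) p i; set W := \sum_(i < m) w i; set B := \sum_(i < m) p i ^+ 2 / w i.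
have W0 : 0 <= W by apply: sumr_ge0 => i _; exact: ltW.
have B0 : 0 <= B by apply: sumr_ge0 => i _; rewrite divr_ge0 ?sqr_ge0 ?ltW.
have wm := wp m.
have := @cs_step A B W (p m / w m) W0 B0 IH.
set q := p m / w m.
have pq : p m = q * w m by rewrite /q mulfVK // gt_eqF.
rewrite pq. 
have -> : (q * w m) ^+ 2 / w m = q ^+ 2 * w m by field; rewrite gt_eqF.
move=> hs. have hh : 0 <= w m * (W * q ^+ 2 + B - 2 * A * q) by apply: mulr_ge0; [exact: ltW | rewrite subr_ge0].
have IH' : A ^+ 2 <= W * B := IH.
rewrite -subr_ge0.
have -> : (W + w m) * (B + q ^+ 2 * w m) - (A + q * w m) ^+ 2 =
  (W * B - A ^+ 2) + w m * (W * q ^+ 2 + B - 2 * A * q) by ring.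
by apply: addr_ge0 => //; rewrite subr_ge0.
Qed.
End CS.

Set Implicit Arguments.
Unset Strict Implicit.

Section Basic.
Variable R : realType.
Local Notation C := R[i].

Lemma cabs2M (z w : C) : cabs2 (z * w) = cabs2 z * cabs2 w.
Proof. case: z => x y; case: w => u v; rewrite /cabs2 /=. ring. Qed.
Lemma cabs2_ge0 (z : C) : 0 <= cabs2 z.
Proof. rewrite /cabs2; apply: addr_ge0; exact: sqr_ge0. Qed.
Lemma cabs2_0 : cabs2 (0 : C) = 0.
Proof. by rewrite /cabs2 /= expr0n /= addr0. Qed.
Lemma cabs2_1 : cabs2 (1 : C) = 1.
Proof. by rewrite /cabs2 /= expr0n /= addr0 expr1n. Qed.
Lemma cabs2_eq0 (z : C) : cabs2 z = 0 -> z = 0.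
Proof.
case: z => x y; rewrite /cabs2 /= => /eqP; rewrite paddr_eq0 ?sqr_ge0 //.
by rewrite !sqrf_eq0 => /andP[/eqP-> /eqP->].
Qed.
Lemma cabs2N (z : C) : cabs2 (- z) = cabs2 z.
Proof. case: z => x y; rewrite /cabs2 /=. ring. Qed.
Lemma cabs2D (z w : C) : cabs2 (z + w) <= 2 * cabs2 z + 2 * cabs2 w.
Proof.
case: z => x y; case: w => u v; rewrite /cabs2 /=.
have h1 : 0 <= (x - u) ^+ 2 by exact: sqr_ge0.
have h2 : 0 <= (y - v) ^+ 2 by exact: sqr_ge0.
nra.
Qed.
Lemma cabs2V (z : C) : z != 0 -> cabs2 (z^-1) = (cabs2 z)^-1.
Proof.
move=> nz; have h : cabs2 (z^-1) * cabs2 z = 1 by rewrite -cabs2M mulVf // cabs2_1.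
have nz2 : cabs2 z != 0 by apply/eqP => /cabs2_eq0 /eqP; rewrite (negPf nz).
by apply: (mulIf nz2); rewrite h mulVf.
Qed.
Lemma cabs2_gt0 (z : C) : z != 0 -> 0 < cabs2 z.
Proof.
move=> nz; rewrite lt_def cabs2_ge0 andbT; apply/eqP => /cabs2_eq0 /eqP.
by rewrite (negPf nz).
Qed.
Lemma cabs_ge0 (z : C) : 0 <= cabs z. Proof. exact: sqrtr_ge0. Qed.
Lemma cabs2E (z : C) : cabs2 z = cabs z ^+ 2.
Proof. by rewrite /cabs sqr_sqrtr // cabs2_ge0. Qed.
Lemma normC_cabs (z : C) : `|z| = ((cabs z)%:C)%C.
Proof. by rewrite normc_def. Qed.
Lemma cabs_sum (I : Type) (r : seq I) (P : pred I) (u : I -> C) :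
  cabs (\sum_(i <- r | P i) u i) <= \sum_(i <- r | P i) cabs (u i).
Proof.
have H := ler_norm_sum r u P.
have E : \sum_(i <- r | P i) `|u i| = ((\sum_(i <- r | P i) cabs (u i))%:C)%C.
  by rewrite raddf_sum; apply: eq_bigr => i _; rewrite normc_def.
by rewrite E normc_def lecR in H.
Qed.
Lemma cabs2_sum (I : Type) (r : seq I) (P : pred I) (u : I -> C) :
  cabs2 (\sum_(i <- r | P i) u i) <= (\sum_(i <- r | P i) cabs (u i)) ^+ 2.
Proof.
rewrite cabs2E; apply: lerXn2r; rewrite ?nnegrE ?cabs_ge0 ?sumr_ge0 //.
  by move=> i _; exact: cabs_ge0.
exact: cabs_sum.
Qed.

Definition Pn (x : nat -> C) (N : nat) : R := \sum_(k < N) cabs2 (x k).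
Definition N2 (x : nat -> C) : R := limn (series (fun n => cabs2 (x n)) : R ^nat).

Lemma seriesPn x N : (series (fun n => cabs2 (x n)) : R ^nat) N = Pn x N.
Proof. by rewrite seriesEord. Qed.

Lemma Pn_ge0 x N : 0 <= Pn x N.
Proof. by apply: sumr_ge0 => i _; exact: cabs2_ge0. Qed.

Lemma Pn_nd x : nondecreasing_seq (series (fun n => cabs2 (x n)) : R ^nat).
Proof.
apply/nondecreasing_seqP => n; rewrite !seriesPn /Pn big_ord_recr /=.
by rewrite lerDl cabs2_ge0.
Qed.

Lemma Pn_mono x M N : (M <= N)%N -> Pn x M <= Pn x N.
Proof. by move=> MN; rewrite -!seriesPn; apply: Pn_nd. Qed.

Lemma l2P x : l2 x <-> exists B, forall N, Pn x N <= B.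
Proof.
split.
  move=> h; exists (N2 x) => N; rewrite -seriesPn.
  exact: nondecreasing_cvgn_le (Pn_nd x) h N.
move=> [B hB]; apply: nondecreasing_is_cvgn; first exact: Pn_nd.
by exists B => _ [n _ <-]; rewrite seriesPn.
Qed.

Lemma Pn_le_N2 x N : l2 x -> Pn x N <= N2 x.
Proof. move=> h; rewrite -seriesPn; exact: nondecreasing_cvgn_le (Pn_nd x) h N. Qed.

Lemma N2_le x B : l2 x -> (forall N, Pn x N <= B) -> N2 x <= B.
Proof.
move=> h hB; apply: limr_le => //; apply: nearW => N /=.
by rewrite seriesPn.
Qed.

Lemma N2_ge0 {x} : l2 x -> 0 <= N2 x.
Proof. by move=> h; apply: le_trans (@Pn_le_N2 x 0%N h); exact: Pn_ge0. Qed.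

Lemma N2_tail x (e : R) : l2 x -> 0 < e -> exists N, N2 x - Pn x N < e.
Proof.
move=> h ep; move: h => /cvgrPdist_lt /(_ e ep) [N _ HN]; exists N.
have := HN N (leqnn N); rewrite /= seriesPn.
move/(le_lt_trans (ler_norm _)) => //.
Qed.

Lemma coord_le x n : l2 x -> cabs2 (x n) <= N2 x.
Proof.
move=> h; apply: le_trans (@Pn_le_N2 x n.+1 h).
rewrite /Pn big_ord_recr /= lerDr; exact: Pn_ge0.
Qed.

Lemma l2norm_N2 x : l2norm x = Num.sqrt (N2 x).
Proof. by []. Qed.

Lemma l2B x B : (forall N, Pn x N <= B) -> l2 x /\ N2 x <= B.
Proof.
move=> hB; have h : l2 x by apply/l2P; exists B.
by split=> //; exact: N2_le.
Qed.

Lemma N2_eq0 x : l2 x -> N2 x <= 0 -> x = (fun _ => 0).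
Proof.
move=> h h0; apply: funext => n; apply: cabs2_eq0; apply/eqP.
by rewrite eq_le cabs2_ge0 andbT (le_trans (@coord_le x n h)).
Qed.

Lemma finsupp_l2 (x : nat -> C) m : (forall n, (m <= n)%N -> x n = 0) -> l2 x.
Proof.
move=> hx; apply/l2P; exists (Pn x m) => N.
case: (leqP N m) => [|mN]; first exact: Pn_mono.
rewrite /Pn -(subnKC (ltnW mN)) big_split_ord /= [X in _ + X]big1 ?addr0 //.
by move=> i _; rewrite hx ?leq_addr // cabs2_0.
Qed.


Lemma N2_0 : N2 (fun _ => (0 : C)) = 0.
Proof.
have [h1 h2] := @l2B (fun _ => 0) 0 (fun N => ltac:(by rewrite /Pn big1 // => i _; rewrite cabs2_0)).
by apply/eqP; rewrite eq_le h2 N2_ge0.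
Qed.
Lemma l2_0 : l2 (fun _ => (0 : C)).
Proof. by apply: (@finsupp_l2 _ 0%N). Qed.

Lemma l2_lin (c : C) {x y} : l2 x -> l2 y ->
  l2 (fun n => c * x n + y n) /\
  N2 (fun n => c * x n + y n) <= 2 * cabs2 c * N2 x + 2 * N2 y.
Proof.
move=> hx hy; apply: l2B => N; rewrite /Pn.
apply: (@le_trans _ _ (\sum_(k < N) (2 * cabs2 c * cabs2 (x k) + 2 * cabs2 (y k)))).
  apply: ler_sum => k _; rewrite -mulrA -cabs2M; exact: cabs2D.
rewrite big_split /= -!mulr_sumr; apply: lerD.
  apply: ler_wpM2l; first by rewrite mulr_ge0 ?cabs2_ge0.
  exact: Pn_le_N2.
by apply: ler_wpM2l => //; exact: Pn_le_N2.
Qed.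

Lemma l2_scale (c : C) {x} : l2 x ->
  l2 (fun n => c * x n) /\ N2 (fun n => c * x n) <= cabs2 c * N2 x.
Proof.
move=> hx; apply: l2B => N; rewrite /Pn.
under eq_bigr do rewrite cabs2M.
rewrite -mulr_sumr; apply: ler_wpM2l; first exact: cabs2_ge0.
exact: Pn_le_N2.
Qed.

Lemma l2_vsub {x y} : l2 x -> l2 y ->
  l2 (vsub x y) /\ N2 (vsub x y) <= 2 * N2 x + 2 * N2 y.
Proof.
move=> hx hy; apply: l2B => N; rewrite /Pn /vsub.
apply: (@le_trans _ _ (\sum_(k < N) (2 * cabs2 (x k) + 2 * cabs2 (y k)))).
  by apply: ler_sum => k _; rewrite -(cabs2N (y k)); exact: cabs2D.
rewrite big_split /= -!mulr_sumr; apply: lerD.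
  by apply: ler_wpM2l => //; exact: Pn_le_N2.
by apply: ler_wpM2l => //; exact: Pn_le_N2.
Qed.

Lemma l2_add (x y : nat -> C) : l2 x -> l2 y -> l2 (fun n => x n + y n).
Proof.
move=> hx hy; have [h _] := l2_lin 1 hx hy.
by have <- : (fun n => 1 * x n + y n) = (fun n => x n + y n) by apply: funext => n; rewrite mul1r.
Qed.

Lemma l2norm_le1 x : (l2norm x <= 1) = (N2 x <= 1).
Proof. by rewrite l2norm_N2 -{1}sqrtr1 ler_sqrt. Qed.

Lemma l2norm_lt x (e : R) : 0 < e -> (l2norm x < e) = (N2 x < e ^+ 2).
Proof.
move=> ep; rewrite l2norm_N2 {1}(_ : e = Num.sqrt (e ^+ 2)).
  by rewrite ltr_sqrt // exprn_gt0.
by rewrite sqrtr_sqr ger0_norm // ltW.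
Qed.

Lemma l2norm_ge0 (x : nat -> C) : 0 <= l2norm x.
Proof. exact: sqrtr_ge0. Qed.

Definition good (A : Op R) := (forall x : nat -> C, l2 x -> l2 (A x)) /\
  exists M, 0 <= M /\ forall x, l2 x -> N2 (A x) <= M * N2 x.

Lemma bounded_good A : bounded_op A -> good A.
Proof.
case=> h1 _ _ [M hM]; split=> //; exists (M ^+ 2); split; first exact: sqr_ge0.
move=> x hx; have := hM x hx.
have h0 := l2norm_ge0 (A x).
move=> le; have : l2norm (A x) ^+ 2 <= (M * l2norm x) ^+ 2.
  by apply: lerXn2r; rewrite ?nnegrE // (le_trans h0 le).
rewrite exprMn !l2norm_N2 (sqr_sqrtr (N2_ge0 (h1 x hx))) (sqr_sqrtr (N2_ge0 hx)). by [].
Qed.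

Lemma good_sub S S' : good S -> good S' -> good (opsub S S').
Proof.
move=> [h1 [M [M0 hM]]] [h1' [M' [M0' hM']]]; split.
  by move=> x hx; case: (l2_vsub (h1 x hx) (h1' x hx)).
exists (2 * M + 2 * M'); split; first by rewrite addr_ge0 ?mulr_ge0.
move=> x hx; case: (l2_vsub (h1 x hx) (h1' x hx)) => _ le.
rewrite /opsub (le_trans le) //.
have -> : (2 * M + 2 * M') * N2 x = 2 * (M * N2 x) + 2 * (M' * N2 x) by ring.
by rewrite lerD // ler_wpM2l // ?hM ?hM'.
Qed.

Lemma opnorm_ub A x : good A -> l2 x -> N2 x <= 1 -> l2norm (A x) <= opnorm A.
Proof.
move=> [h1 [M [M0 hM]]] hx hx1; apply: ub_le_sup; last first.
  by exists x => //; split => //; rewrite l2norm_le1.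
exists (Num.sqrt M) => _ [y [hy hy1] <-].
rewrite l2norm_N2 ler_sqrt // (le_trans (hM y hy)) //.
rewrite l2norm_le1 in hy1.
by rewrite -{2}(mulr1 M) ler_wpM2l.
Qed.

Lemma opnorm_le A d : good A -> 0 <= d ->
  (forall x, l2 x -> N2 x <= 1 -> N2 (A x) <= d ^+ 2) -> opnorm A <= d.
Proof.
move=> [h1 _] d0 hd; apply: ge_sup.
  exists (l2norm (A (fun _ => 0))), (fun _ => 0) => //; split; first exact: l2_0.
  by rewrite l2norm_le1 N2_0 ler01.
move=> _ [y [hy hy1] <-]; rewrite l2norm_le1 in hy1.
rewrite l2norm_N2 -(ger0_norm d0) -sqrtr_sqr ler_sqrt ?sqr_ge0 //.
exact: hd.
Qed.

Lemma opnorm_ge0 A : good A -> 0 <= opnorm A.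
Proof.
move=> gA; apply: le_trans (@opnorm_ub A (fun _ => 0) gA l2_0 _); first exact: l2norm_ge0.
by rewrite N2_0 ler01.
Qed.

End Basic.

Section WS.
Variable R : realType.
Local Notation C := R[i].
Variable a : nat -> C.
Hypothesis ha : forall n, a n != 0.
Hypothesis hdec : forall n, cabs (a n.+1) <= cabs (a n).
Hypothesis hl2 : l2 a.

Definition beta n : C := \prod_(i < n) a i.
Lemma beta_neq0 n : beta n != 0.
Proof. by apply/prodf_neq0 => i _. Qed.
Lemma beta0 : beta 0 = 1. Proof. by rewrite /beta big_ord0. Qed.
Lemma betaS n : beta n.+1 = beta n * a n. Proof. by rewrite /beta big_ord_recr. Qed.
Lemma betaD j k : beta (j + k) = beta j * \prod_(i < k) a (j + i)%N.
Proof. by rewrite /beta big_split_ord. Qed.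

Lemma cabs2_dec n m : (n <= m)%N -> cabs2 (a m) <= cabs2 (a n).
Proof.
move=> /subnKC <-; elim: (m - n)%N => [|d IH]; first by rewrite addn0.
apply: le_trans IH; rewrite addnS !cabs2E; apply: lerXn2r; rewrite ?nnegrE ?cabs_ge0 //.
Qed.

Lemma cabs2_prod (I : Type) (r : seq I) (P : pred I) (F : I -> C) :
  cabs2 (\prod_(i <- r | P i) F i) = \prod_(i <- r | P i) cabs2 (F i).
Proof.
elim: r => [|i r IH]; first by rewrite !big_nil cabs2_1.
by rewrite !big_cons; case: (P i) => //; rewrite cabs2M IH.
Qed.

Definition psi j := cabs2 (a j) / cabs2 (a 0).
Lemma psi_ge0 j : 0 <= psi j.
Proof. by rewrite /psi divr_ge0 ?cabs2_ge0. Qed.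
Lemma psi_gt0 j : 0 < psi j.
Proof. by rewrite /psi divr_gt0 ?cabs2_gt0. Qed.

Definition rho j k := beta (j + k) / (beta j * beta k).

Lemma rho_bound j k : cabs2 (rho j k) <= psi j + psi k.
Proof.
have e : rho j k = \prod_(i < k) (a (j + i)%N / a i).
  by rewrite /rho betaD prodf_div /beta; field; rewrite !beta_neq0.
rewrite e cabs2_prod {e}.
case: k => [|k]; first by rewrite big_ord0 /psi mulfV ?lerDr ?psi_ge0 // gt_eqF ?cabs2_gt0.
rewrite big_ord_recl /= addn0.
have h1 : \prod_(i < k) cabs2 (a (j + bump 0 i)%N / a (bump 0 i)) <= 1.
  apply: prodr_ile1 => i _; rewrite cabs2M cabs2V // mulr_ge0 ?invr_ge0 ?cabs2_ge0 //=.
  rewrite ler_pdivrMr ?cabs2_gt0 // mul1r; apply: cabs2_dec; exact: leq_addl.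
have h2 : 0 <= cabs2 (a j / a 0) by exact: cabs2_ge0.
apply: le_trans (_ : psi j <= _); last by rewrite lerDl psi_ge0.
rewrite /psi -cabs2V // -cabs2M.
by rewrite -[leRHS]mulr1 ler_wpM2l.
Qed.

Lemma conv_id (f g : nat -> R) N :
  \sum_(n < N) \sum_(j < n.+1) f j * g (n - j)%N =
  \sum_(j < N) f j * \sum_(k < N - j) g k.
Proof.
elim: N => [|N IH]; first by rewrite !big_ord0.
rewrite big_ord_recr /= IH [in RHS]big_ord_recr /=.
rewrite subSnn big_ord1 big_ord_recr /= subnn addrA; congr (_ + _).
rewrite -big_split /=; apply: eq_bigr => j _.
by rewrite subSn ?(ltnW (ltn_ord j)) // big_ord_recr /= mulrDr.
Qed.


Lemma conv_le (f g : nat -> R) N : (forall n, 0 <= f n) -> (forall n, 0 <= g n) ->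
  \sum_(n < N) \sum_(j < n.+1) f j * g (n - j)%N <=
  (\sum_(j < N) f j) * (\sum_(k < N) g k).
Proof.
move=> f0 g0; rewrite conv_id mulr_suml; apply: ler_sum => j _.
apply: ler_wpM2l => //.
rewrite [leRHS](_ : _ = \sum_(k < (N - j) + j) g k); last by rewrite subnK // ltnW.
rewrite big_split_ord /= lerDl; exact: sumr_ge0.
Qed.

Lemma fld_aux (F : fieldType) (b bj bk h x : F) : bj != 0 -> bk != 0 ->
  b * (h / bj * (x / bk)) = h * x * (b / (bj * bk)).
Proof. by move=> *; field; apply/andP. Qed.

Definition ub (u : nat -> C) k := u k / beta k.
Definition conv (u v : nat -> C) n := \sum_(j < n.+1) u j * v (n - j)%N.
Definition Mop (h : nat -> C) : Op R := fun x n =>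
  if `[< l2 x >] then beta n * conv (ub h) (ub x) n else 0.

Lemma MopE h x n : l2 x -> Mop h x n = beta n * conv (ub h) (ub x) n.
Proof. by move=> hx; rewrite /Mop asboolT. Qed.
Lemma Mop_nl2 h x : ~ l2 x -> Mop h x = fun _ => 0.
Proof. by move=> hx; apply: funext => n; rewrite /Mop asboolF. Qed.

Lemma Mop_rho h x n : l2 x ->
  Mop h x n = \sum_(j < n.+1) h j * x (n - j)%N * rho j (n - j).
Proof.
move=> hx; rewrite MopE // /conv mulr_sumr; apply: eq_bigr => j _.
rewrite /ub /rho subnKC; last by rewrite -ltnS.
by apply: fld_aux; rewrite beta_neq0.
Qed.

Definition K := 2 * (N2 a / cabs2 (a 0)).
Lemma K_ge0 : 0 <= K.
Proof. by rewrite /K mulr_ge0 // divr_ge0 ?cabs2_ge0 ?N2_ge0. Qed.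

Lemma sum_psi n : \sum_(j < n) psi j <= N2 a / cabs2 (a 0).
Proof.
rewrite /psi -mulr_suml ler_wpM2r ?invr_ge0 ?cabs2_ge0 //.
exact: Pn_le_N2.
Qed.

Lemma Mop_coord h x n : l2 x -> cabs2 (Mop h x n) <=
  K * \sum_(j < n.+1) cabs2 (h j) * cabs2 (x (n - j)%N).
Proof.
move=> hx; rewrite Mop_rho //.
set u := fun j : nat => h j * x (n - j)%N * rho j (n - j).
set w := fun j : nat => psi j + psi (n - j)%N.
have wp : forall j, 0 < w j by move=> j; rewrite /w addr_gt0 ?psi_gt0.
apply: le_trans; first exact: cabs2_sum.
apply: le_trans (@wcs _ n.+1 (fun j => cabs (u j)) w wp) _.
apply: ler_pM.
- by apply: sumr_ge0 => j _; exact: ltW.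
- by apply: sumr_ge0 => j _; rewrite divr_ge0 ?sqr_ge0 ?ltW.
- rewrite /w big_split /= /K mulr2n mulrDl mul1r; apply: lerD; first exact: sum_psi.
  have -> : \sum_(j < n.+1) psi (n - j)%N = \sum_(j < n.+1) psi j.
    rewrite (reindex_inj rev_ord_inj); apply: eq_bigr => j _ /=.
    by rewrite subSS subKn // -ltnS.
  exact: sum_psi.
- apply: ler_sum => j _; rewrite -cabs2E ler_pdivrMr // /u cabs2M (cabs2M (h j)).
  rewrite ler_wpM2l ?mulr_ge0 ?cabs2_ge0 //.
  exact: rho_bound.
Qed.

Lemma Mop_est h x : l2 h -> l2 x -> l2 (Mop h x) /\ N2 (Mop h x) <= K * N2 h * N2 x.
Proof.
move=> hh hx; apply: l2B => N; rewrite /Pn.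
apply: (@le_trans _ _ (\sum_(n < N) K * \sum_(j < n.+1) cabs2 (h j) * cabs2 (x (n - j)%N))).
  by apply: ler_sum => n _; exact: Mop_coord.
rewrite -mulr_sumr -mulrA ler_wpM2l ?K_ge0 //.
apply: le_trans (conv_le N (fun n => cabs2_ge0 (h n)) (fun n => cabs2_ge0 (x n))) _.
apply: ler_pM; rewrite ?Pn_ge0 //; exact: Pn_le_N2.
Qed.

Lemma conv_poly u v n N : (n < N)%N ->
  conv u v n = ((\poly_(i < N) u i) * \poly_(i < N) v i)`_n.
Proof.
move=> nN; rewrite coefM /conv; apply: eq_bigr => j _.
have jn : (j <= n)%N by rewrite -ltnS.
rewrite !coef_poly (leq_ltn_trans jn nN) (leq_ltn_trans (leq_subr j n) nN) //.
Qed.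

Lemma conv_comm u v n : conv u v n = conv v u n.
Proof. by rewrite !(@conv_poly _ _ n n.+1) // mulrC. Qed.

Lemma conv_ext u u' v v' n : (forall k, (k <= n)%N -> u k = u' k) ->
  (forall k, (k <= n)%N -> v k = v' k) -> conv u v n = conv u' v' n.
Proof.
move=> hu hv; apply: eq_bigr => j _.
have jn : (j <= n)%N by rewrite -ltnS.
by rewrite hu // hv // leq_subr.
Qed.

Lemma conv_assoc u v w n : conv u (conv v w) n = conv (conv u v) w n.
Proof.
set Pu := \poly_(i < n.+1) u i; set Pv := \poly_(i < n.+1) v i.
set Pw := \poly_(i < n.+1) w i.
have e1 : conv u (conv v w) n = (Pu * (Pv * Pw))`_n.
  rewrite coefM /conv; apply: eq_bigr => j _.
  rewrite coef_poly (ltn_ord j); congr (_ * _).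
  by rewrite -/(conv v w (n - j)) (@conv_poly _ _ _ n.+1) // ltnS leq_subr.
have e2 : conv (conv u v) w n = ((Pu * Pv) * Pw)`_n.
  rewrite coefM /conv; apply: eq_bigr => j _.
  have jn : (n - j < n.+1)%N by rewrite ltnS leq_subr.
  rewrite [Pw`_ _]coef_poly jn; congr (_ * _).
  by rewrite -/(conv u v j) (@conv_poly _ _ _ n.+1).
by rewrite e1 e2 mulrA.
Qed.

Lemma conv_linr c u v v' n :
  conv u (fun k => c * v k + v' k) n = c * conv u v n + conv u v' n.
Proof.
rewrite /conv mulr_sumr -big_split /=; apply: eq_bigr => j _.
by rewrite mulrDr mulrCA.
Qed.
Lemma conv_linl c u u' v n :
  conv (fun k => c * u k + u' k) v n = c * conv u v n + conv u' v n.
Proof.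
rewrite /conv mulr_sumr -big_split /=; apply: eq_bigr => j _.
by rewrite mulrDl mulrA.
Qed.
Lemma conv0r u n : conv u (fun _ => 0) n = 0.
Proof. by rewrite /conv big1 // => j _; rewrite mulr0. Qed.

Lemma ub_lin c x y : ub (fun n => c * x n + y n) = fun k => c * ub x k + ub y k.
Proof. by apply: funext => k; rewrite /ub mulrDl mulrA. Qed.
Lemma ub0 : ub (fun _ => 0) = fun _ => 0.
Proof. by apply: funext => k; rewrite /ub mul0r. Qed.

Lemma ub_Mop h x k : l2 x -> ub (Mop h x) k = conv (ub h) (ub x) k.
Proof. by move=> hx; rewrite /ub MopE // mulrC mulrA mulVf ?mul1r ?beta_neq0. Qed.

Lemma Mop_comm h g : l2 h -> l2 g -> Mop h g = Mop g h.
Proof. by move=> hh hg; apply: funext => n; rewrite !MopE // conv_comm. Qed.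

Lemma Mop0 h : Mop h (fun _ => 0) = fun _ => 0.
Proof.
apply: funext => n; rewrite MopE; last exact: l2_0.
by rewrite ub0 conv0r mulr0.
Qed.

Lemma Mop_comp h g : l2 g -> (fun x => Mop h (Mop g x)) = Mop (Mop h g).
Proof.
move=> hg; apply: funext => x.
have [hx|hx] := pselect (l2 x); last by rewrite (Mop_nl2 g hx) Mop0 (Mop_nl2 _ hx).
have hgx : l2 (Mop g x) by case: (Mop_est hg hx).
apply: funext => n; rewrite !MopE //; congr (_ * _).
rewrite (@conv_ext _ (ub h) _ (conv (ub g) (ub x))) //; last first.
  by move=> k _; rewrite ub_Mop.
rewrite conv_assoc; apply: conv_ext => // k _.
by rewrite ub_Mop.
Qed.

Lemma Mop_lin h c x y : l2 x -> l2 y ->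
  Mop h (fun n => c * x n + y n) = fun n => c * Mop h x n + Mop h y n.
Proof.
move=> hx hy; have [hxy _] := l2_lin c hx hy.
apply: funext => n; rewrite !MopE // ub_lin conv_linr.
by rewrite mulrDr mulrCA.
Qed.

Lemma Mop_linh c h g x :
  Mop (fun n => c * h n + g n) x = fun n => c * Mop h x n + Mop g x n.
Proof.
have [hx|hx] := pselect (l2 x); last first.
  by rewrite !Mop_nl2 //; apply: funext => n; rewrite mulr0 addr0.
apply: funext => n; rewrite !MopE // ub_lin conv_linl.
by rewrite mulrDr mulrCA.
Qed.

Lemma Mop_vsub h g x : vsub (Mop h x) (Mop g x) = Mop (vsub h g) x.
Proof.
have -> : vsub h g = fun n => -1 * g n + h n.
  by apply: funext => n; rewrite /vsub mulN1r addrC.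
rewrite Mop_linh; apply: funext => n; rewrite /vsub mulN1r addrC.
by [].
Qed.

Lemma Mop_bounded h : l2 h -> bounded_op (Mop h).
Proof.
move=> hh; split.
- by move=> x hx; case: (Mop_est hh hx).
- by move=> x hx; rewrite Mop_nl2.
- by move=> c x y hx hy; rewrite Mop_lin.
exists (Num.sqrt (K * N2 h)) => x hx.
have [_ le] := Mop_est hh hx.
have h0 := N2_ge0 hh; have x0 := N2_ge0 hx; have k0 := K_ge0.
rewrite !l2norm_N2 -sqrtrM; last by rewrite mulr_ge0.
rewrite ler_sqrt //; do 2 apply: mulr_ge0 => //.
Qed.

Lemma Mop_good h : l2 h -> good (Mop h).
Proof. by move=> hh; apply: bounded_good; exact: Mop_bounded. Qed.

Local Notation e0 := (@e_ R 0).
Lemma l2_e0 : l2 e0.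
Proof. by apply: (@finsupp_l2 _ _ 1%N) => n; rewrite /e_; case: n. Qed.

Lemma N2_e0 : N2 e0 <= 1.
Proof.
have hP : forall N, Pn e0 N <= 1.
  case=> [|N]; first by rewrite /Pn big_ord0 ler01.
  rewrite /Pn big_ord_recl /= /e_ /= cabs2_1 big1 ?addr0 // => i _.
  by rewrite cabs2_0.
by case: (l2B hP).
Qed.

Lemma Mop_e0 h : Mop h e0 = h.
Proof.
apply: funext => n; rewrite MopE; last exact: l2_e0.
rewrite /conv big_ord_recr /= subnn.
rewrite big1 ?add0r; last first.
  by move=> j _; rewrite /ub /e_ subn_eq0 leqNgt ltn_ord /= mul0r mulr0.
rewrite /ub /e_ /= beta0 divr1 mulr1 mulrC mulfVK //; exact: beta_neq0.
Qed.

Lemma shift_l2 x : l2 x -> l2 (Defs.shift a x).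
Proof.
move=> hx; have hP : forall N, Pn (Defs.shift a x) N <= cabs2 (a 0) * N2 x.
  case=> [|N]; first by rewrite /Pn big_ord0 mulr_ge0 ?cabs2_ge0 ?N2_ge0.
  rewrite /Pn big_ord_recl /= /Defs.shift asboolT // cabs2_0 add0r.
  apply: (@le_trans _ _ (\sum_(i < N) cabs2 (a 0) * cabs2 (x i))).
    apply: ler_sum => i _; rewrite cabs2M ler_wpM2r ?cabs2_ge0 //.
    exact: cabs2_dec.
  rewrite -mulr_sumr ler_wpM2l ?cabs2_ge0 //; exact: Pn_le_N2.
by case: (l2B hP).
Qed.

Lemma iter_l2 i x : l2 x -> l2 (iter i (Defs.shift a) x).
Proof. by move=> hx; elim: i => [|i IH] //=; exact: shift_l2. Qed.

Lemma aux_sh (F : fieldType) (an b c xx : F) :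
  an * (b / c * xx) = b * an / c * xx.
Proof. by rewrite mulrA mulrCA mulrA. Qed.

Lemma iter_shift i x : l2 x -> iter i (Defs.shift a) x =
  fun n => if (i <= n)%N then beta n / beta (n - i) * x (n - i)%N else 0.
Proof.
move=> hx; elim: i => [|i IH].
  by apply: funext => n /=; rewrite subn0 mulfV ?mul1r ?beta_neq0.
have hl := iter_l2 (i:=i) hx; rewrite IH in hl.
rewrite iterS IH; apply: funext => n; rewrite /Defs.shift asboolT //.
case: n => [|n] //.
rewrite ltnS subSS; case: ifP => _; last by rewrite mulr0.
by rewrite betaS aux_sh.
Qed.

Lemma aux_sh2 (F : comRingType) (p b c xx : F) :
  p * (b * c * xx) = b * (p * (xx * c)).
Proof. by ring. Qed.

Lemma sum_pad (F : nat -> C) m M : (forall i, (m <= i)%N -> F i = 0) -> (m <= M)%N ->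
  \sum_(i < m) F i = \sum_(i < M) F i.
Proof.
move=> hF mM; rewrite -(subnKC mM) big_split_ord /= [X in _ = _ + X]big1 ?addr0 //.
by move=> i _; rewrite hF // leq_addr.
Qed.

Definition psym (p : {poly C}) := fun n => p`_n * beta n.

Lemma l2_psym p : l2 (psym p).
Proof.
apply: (@finsupp_l2 _ _ (size p)) => n hn.
by rewrite /psym nth_default // mul0r.
Qed.

Lemma polyop_Mop p : polyop a p = Mop (psym p).
Proof.
apply: funext => x; have [hx|hx] := pselect (l2 x); last first.
  by rewrite Mop_nl2 //; apply: funext => n; rewrite /polyop asboolF.
apply: funext => n; rewrite /polyop asboolT // MopE //.
set G := fun i : nat => p`_i * (if (i <= n)%N then beta n / beta (n - i) * x (n - i)%N else 0).
have e1 : \sum_(i < size p) p`_i * iter i (Defs.shift a) x n = \sum_(i < size p) G i.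
  by apply: eq_bigr => i _; rewrite iter_shift.
rewrite e1 (@sum_pad G _ (size p + n.+1)); last by rewrite leq_addr.
  rewrite -(@sum_pad G n.+1); last by rewrite leq_addl.
    rewrite /conv mulr_sumr; apply: eq_bigr => j _.
    have jn : (j <= n)%N by rewrite -ltnS.
    rewrite /G jn /ub /psym mulfK ?beta_neq0 //.
    by rewrite aux_sh2.
  by move=> i; rewrite /G ltnNge => /negbTE ->; rewrite mulr0.
by move=> i hi; rewrite /G nth_default // mul0r.
Qed.

Lemma shift_Mop : Defs.shift a = Mop (psym 'X).
Proof.
rewrite -polyop_Mop; apply: funext => x; apply: funext => n.
rewrite /polyop; case: asboolP => hx; last by rewrite /Defs.shift asboolF.
by rewrite size_polyX big_ord_recr big_ord1 /= !coefX /= mul0r add0r mul1r.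
Qed.

Definition trunc N (h : nat -> C) := fun n => if (n < N)%N then h n else 0.
Lemma l2_trunc N h : l2 (trunc N h).
Proof. by apply: (@finsupp_l2 _ _ N) => n hn; rewrite /trunc ltnNge hn. Qed.
Definition tpoly N h : {poly C} := \poly_(i < N) (h i / beta i).
Lemma psym_tpoly N h : psym (tpoly N h) = trunc N h.
Proof.
apply: funext => n; rewrite /psym /tpoly /trunc coef_poly.
by case: ifP => _; rewrite ?mul0r // mulfVK ?beta_neq0.
Qed.

Lemma N2_tail_trunc N h : l2 h -> N2 (vsub h (trunc N h)) <= N2 h - Pn h N.
Proof.
move=> hh; have hP : forall M, Pn (vsub h (trunc N h)) M <= N2 h - Pn h N.
  move=> M; apply: (@le_trans _ _ (Pn (vsub h (trunc N h)) (N + M))).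
    by apply: Pn_mono; rewrite leq_addl.
  have e : Pn (vsub h (trunc N h)) (N + M) = Pn h (N + M) - Pn h N.
    rewrite /Pn !big_split_ord /= big1 ?add0r; last first.
      by move=> i _; rewrite /vsub /trunc ltn_ord subrr cabs2_0.
    rewrite addrAC subrr add0r; apply: eq_bigr => i _.
    by rewrite /vsub /trunc ltnNge leq_addr /= subr0.
  by rewrite e lerB // Pn_le_N2.
by case: (l2B hP).
Qed.

Lemma opdist_pt (S S' : Op R) (x : nat -> C) : good S -> good S' -> l2 x -> N2 x <= 1 ->
  N2 (vsub (S x) (S' x)) <= opdist S S' ^+ 2.
Proof.
move=> gS gS' hx hx1; have g := good_sub gS gS'.
have := opnorm_ub g hx hx1; rewrite /opdist /opsub => le.
have h0 := l2norm_ge0 (vsub (S x) (S' x)).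
have : l2norm (vsub (S x) (S' x)) ^+ 2 <= opnorm (opsub S S') ^+ 2.
  by apply: lerXn2r; rewrite ?nnegrE // (le_trans h0 le).
rewrite l2norm_N2 sqr_sqrtr //; apply: N2_ge0.
by case: g => g1 _; exact: (g1 x hx).
Qed.

Lemma opdist_e0 (S S' : Op R) : good S -> good S' ->
  l2norm (vsub (S e0) (S' e0)) <= opdist S S'.
Proof.
move=> gS gS'; exact: (opnorm_ub (good_sub gS gS') l2_e0 N2_e0).
Qed.

Lemma opdist_Mop h g : l2 h -> l2 g ->
  opdist (Mop h) (Mop g) <= Num.sqrt (K * N2 (vsub h g)).
Proof.
move=> hh hg; have hhg : l2 (vsub h g) by case: (l2_vsub hh hg).
apply: opnorm_le; first exact: good_sub (Mop_good hh) (Mop_good hg).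
  exact: sqrtr_ge0.
move=> x hx hx1; rewrite /opsub Mop_vsub sqr_sqrtr; last first.
  by rewrite mulr_ge0 ?K_ge0 ?N2_ge0.
have [_ le] := Mop_est hhg hx; apply: le_trans le _.
by rewrite -[leRHS]mulr1 ler_wpM2l // mulr_ge0 ?K_ge0 ?N2_ge0.
Qed.

Lemma Mop_approx h : l2 h -> forall e, 0 < e ->
  exists N, opdist (Mop h) (polyop a (tpoly N h)) < e.
Proof.
move=> hh e ep.
have Kp : 0 < K + 1 by rewrite ltr_wpDl ?K_ge0.
have [N hN] := N2_tail hh (divr_gt0 (exprn_gt0 2 ep) Kp).
exists N; rewrite polyop_Mop psym_tpoly.
apply: le_lt_trans (opdist_Mop hh (@l2_trunc N h)) _.
rewrite [X in _ < X](_ : e = Num.sqrt (e ^+ 2)); last by rewrite sqrtr_sqr ger0_norm // ltW.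
rewrite ltr_sqrt ?exprn_gt0 //.
apply: (@le_lt_trans _ _ (K * (N2 h - Pn h N))).
  by rewrite ler_wpM2l ?K_ge0 // N2_tail_trunc.
have t0 : 0 <= N2 h - Pn h N by rewrite subr_ge0 Pn_le_N2.
apply: (@le_lt_trans _ _ ((K + 1) * (N2 h - Pn h N))).
  by rewrite ler_wpM2r // lerDl.
by rewrite -ltr_pdivlMl // mulrC.
Qed.

Lemma bop_zero (S : Op R) : bounded_op S -> S (fun _ => 0) = fun _ => 0.
Proof.
case=> _ _ hlin _; have := hlin 1 (fun _ => 0) (fun _ => 0) (@l2_0 R) (@l2_0 R).
have -> : (fun n : nat => 1 * (0 : C) + 0) = fun _ => 0.
  by apply: funext => n; rewrite mulr0 addr0.
move=> e; apply: funext => n; have := congr1 (fun f => f n) e => /=.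
rewrite mul1r => hn; apply: (@addrI _ (S (fun _ => 0) n)).
by rewrite addr0 -hn.
Qed.

Lemma bop_scale (S : Op R) c x : bounded_op S -> l2 x ->
  S (fun n => c * x n) = fun n => c * S x n.
Proof.
move=> hS hx; have := hS; case=> _ _ hlin _.
have := hlin c x (fun _ => 0) hx (@l2_0 R); rewrite (bop_zero hS).
have -> : (fun n => c * x n + 0) = fun n => c * x n.
  by apply: funext => n; rewrite addr0.
move=> ->; apply: funext => n; by rewrite addr0.
Qed.

Lemma le0_eps (X Kc : R) : 0 <= Kc -> (forall e, 0 < e -> X <= Kc * e) -> X <= 0.
Proof.
move=> K0 H; rewrite leNgt; apply/negP => X0.
have Kp : 0 < Kc + 1 by rewrite ltr_wpDl.
have := H (X / (Kc + 1)) (divr_gt0 X0 Kp).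
rewrite mulrA ler_pdivlMr // => h.
nra.
Qed.

Lemma sq_le (d e : R) : 0 <= d -> 0 < e -> d < Num.sqrt e -> d ^+ 2 <= e.
Proof.
move=> d0 ep lt; rewrite -(sqr_sqrtr (ltW ep)); apply: lerXn2r; rewrite ?nnegrE ?sqrtr_ge0 //.
exact: ltW.
Qed.

Lemma N2_vsubC (u v : nat -> C) : N2 (vsub u v) = N2 (vsub v u).
Proof.
rewrite /N2; have -> // : (fun n => cabs2 (vsub u v n)) = (fun n => cabs2 (vsub v u n)).
by apply: funext => n; rewrite /vsub -cabs2N opprB.
Qed.

Lemma N2_tri (u v w : nat -> C) : l2 u -> l2 v -> l2 w ->
  N2 (vsub u w) <= 2 * N2 (vsub u v) + 2 * N2 (vsub v w).
Proof.
move=> hu hv hw; have [huv _] := l2_vsub hu hv; have [hvw _] := l2_vsub hv hw.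
have [_ le] := l2_lin 1 huv hvw.
have e : (fun n => 1 * vsub u v n + vsub v w n) = vsub u w.
  by apply: funext => n; rewrite /vsub mul1r addrA subrK.
by rewrite e cabs2_1 mulr1 in le.
Qed.

Lemma good_polyop p : good (polyop a p).
Proof. rewrite polyop_Mop; apply: Mop_good; exact: (@l2_psym p). Qed.

Lemma closure_Mop (S : Op R) : bounded_op S ->
  (forall e, 0 < e -> exists p, opdist S (polyop a p) < e) -> S = Mop (S e0).
Proof.
move=> hS happ; set h := S e0.
have hh : l2 h by case: hS => h1 _ _ _; exact: h1 _ l2_e0.
have gS := bounded_good hS.
apply: funext => x; have [hx|hx] := pselect (l2 x); last first.
  by rewrite Mop_nl2 //; case: hS => _ h2 _ _; exact: h2.
set r : R := (1 + N2 x)^-1.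
have nx0 := N2_ge0 hx.
have rp : 0 < r by rewrite invr_gt0 ltr_pwDl.
set c : C := (r%:C)%C.
set x' := fun n => c * x n.
have [hx' lex'] := l2_scale c hx.
have x'1 : N2 x' <= 1.
  apply: le_trans lex' _; rewrite /cabs2 /= expr0n /= addr0.
  have e1 : r * (1 + N2 x) = 1 by rewrite mulVf // gt_eqF // ltr_pwDl.
  nra.
have hSx' : l2 (S x') by case: hS => h1 _ _ _; exact: h1.
have hMx' : l2 (Mop h x') by case: (Mop_est hh hx').
have [hD _] := l2_vsub hSx' hMx'.
have D0 : N2 (vsub (S x') (Mop h x')) <= 0.
  apply: (@le0_eps _ (2 + 2 * K)).
    apply: addr_ge0 => //; apply: mulr_ge0 => //; exact: K_ge0.
  move=> e ep; have ep2 : 0 < Num.sqrt e by rewrite sqrtr_gt0.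
  have [p hp] := happ _ ep2.
  have gp := good_polyop p.
  have od0 : 0 <= opdist S (polyop a p) by apply: opnorm_ge0; exact: good_sub.
  have ode := sq_le od0 ep hp.
  rewrite polyop_Mop in hp od0 ode gp; set g := psym p in hp od0 ode gp.
  have hg : l2 g := @l2_psym p.
  have hgx' : l2 (Mop g x') by case: (Mop_est hg hx').
  apply: le_trans (N2_tri hSx' hgx' hMx') _.
  have A1 : N2 (vsub (S x') (Mop g x')) <= e.
    by apply: le_trans (opdist_pt gS gp hx' x'1) ode.
  have A3 : N2 (vsub g h) <= e.
    rewrite N2_vsubC; have := opdist_pt gS gp l2_e0 N2_e0.
    by rewrite /h Mop_e0 => /le_trans; apply.
  have hgh : l2 (vsub g h) by case: (l2_vsub hg hh).
  have A2 : N2 (vsub (Mop g x') (Mop h x')) <= K * e.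
    rewrite Mop_vsub; have [_ le] := Mop_est hgh hx'.
    apply: le_trans le _; rewrite -mulrA ler_wpM2l ?K_ge0 //.
    apply: le_trans (_ : N2 (vsub g h) * 1 <= _); last by rewrite mulr1.
    by rewrite ler_wpM2l ?N2_ge0.
  have -> : (2 + 2 * K) * e = 2 * e + 2 * (K * e) by ring.
  by apply: lerD; rewrite ler_wpM2l.
have D := N2_eq0 hD D0.
apply: funext => n; have := congr1 (fun f => f n) D => /=.
rewrite /vsub (bop_scale c hS hx) (bop_scale c (Mop_bounded hh) hx) /=.
rewrite -mulrBr => /eqP; rewrite mulf_eq0 => /orP[|].
  by rewrite /c eq_complex /= (gt_eqF rp).
by rewrite subr_eq0 => /eqP.
Qed.

Lemma psym0 p : psym p 0 = p`_0.
Proof. by rewrite /psym beta0 mulr1. Qed.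

Lemma AT_char (S : Op R) : AT a S <-> exists h, (l2 h /\ h 0%N = 0) /\ S = Mop h.
Proof.
split.
  case=> hS happ.
  have eS : S = Mop (S e0).
    apply: closure_Mop => // e ep; have [p [_ hp]] := happ e ep; by exists p.
  exists (S e0); split => //; split; first by case: hS => h1 _ _ _; exact: h1 _ l2_e0.
  apply: cabs2_eq0; apply/eqP; rewrite eq_le cabs2_ge0 andbT.
  apply: (@le0_eps _ 1) => // e ep.
  have ep2 : 0 < Num.sqrt e by rewrite sqrtr_gt0.
  have [p [p0 hp]] := happ _ ep2.
  have gp := good_polyop p; have gS := bounded_good hS.
  have od0 : 0 <= opdist S (polyop a p) by apply: opnorm_ge0; exact: good_sub.
  have ode := sq_le od0 ep hp.
  have := opdist_pt gS gp l2_e0 N2_e0.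
  rewrite polyop_Mop Mop_e0 => le.
  have hS0 : l2 (S e0) by case: hS => h1 _ _ _; exact: h1 _ l2_e0.
  have [hv _] := l2_vsub hS0 (@l2_psym p).
  have := coord_le 0%N hv; rewrite /vsub psym0 p0 subr0 mul1r => le2.
  apply: le_trans le2 _; apply: le_trans le _.
  by rewrite polyop_Mop in ode.
case=> h [[hh h0] ->]; split; first exact: Mop_bounded.
move=> e ep; have [N hN] := Mop_approx hh ep; exists (tpoly N h); split => //.
by rewrite /tpoly coef_poly; case: ifP => // _; rewrite h0 mul0r.
Qed.

Lemma ATu_char (S : Op R) : ATu a S <-> exists h, l2 h /\ S = Mop h.
Proof.
split.
  case=> hS happ.
  have eS : S = Mop (S e0) by apply: closure_Mop.
  by exists (S e0); split => //; case: hS => h1 _ _ _; exact: h1 _ l2_e0.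
case=> h [hh ->]; split; first exact: Mop_bounded.
move=> e ep; have [N hN] := Mop_approx hh ep; by exists (tpoly N h).
Qed.

Lemma sum_delta (x : nat -> C) N n :
  \sum_(k < N | (0 < k)%N) x k * e_ R k n = if (n < N)%N && (0 < n)%N then x n else 0.
Proof.
rewrite big_mkcond /=; elim: N => [|N IH]; first by rewrite big_ord0.
rewrite big_ord_recr /= IH /e_.
case: (ltngtP n N) => [nN|Nn|->].
- rewrite (ltn_trans nN (ltnSn N)) /=.
  by case: (0 < n)%N; case: (0 < N)%N; rewrite /= ?mulr0n ?mulr0 ?addr0.
- rewrite ltnS (leqNgt n N) Nn /= add0r.
  by case: (0 < N)%N; rewrite /= ?mulr0n ?mulr0.
- by rewrite /= add0r ltnSn /=; case: (0 < N)%N; rewrite /= ?mulr1.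
Qed.

Lemma H1_char (x : nat -> C) : @H1 R x <-> l2 x /\ x 0%N = 0.
Proof.
split.
  case=> hx happ; split => //.
  apply: cabs2_eq0; apply/eqP; rewrite eq_le cabs2_ge0 andbT.
  apply: (@le0_eps _ 1) => // e ep.
  have ep2 : 0 < Num.sqrt e by rewrite sqrtr_gt0.
  have [y [[N [c ->]] hy]] := happ _ ep2.
  set y' := fun n => \sum_(k < N | (0 < k)%N) c k * e_ R k n.
  have hy' : l2 y'.
    apply: (@finsupp_l2 _ _ N) => n hn; rewrite /y' sum_delta.
    by rewrite ltnNge hn.
  have [hv _] := l2_vsub hx hy'.
  have e0' : vsub x y' 0%N = x 0%N by rewrite /vsub /y' sum_delta andbF subr0.
  rewrite mul1r -e0'; apply: le_trans (coord_le 0%N hv) _.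
  rewrite l2norm_lt // in hy; rewrite sqr_sqrtr ?ltW // in hy.
  exact: ltW.
case=> hx x0; split => // e ep.
have [N hN] := N2_tail hx (exprn_gt0 2 ep).
exists (fun n => \sum_(k < N | (0 < k)%N) x k * e_ R k n); split.
  by exists N, x.
have ey : (fun n => \sum_(k < N | (0 < k)%N) x k * e_ R k n) = trunc N x.
  apply: funext => n; rewrite sum_delta /trunc.
  by case: n => [|n] /=; rewrite ?x0 ?andbF ?andbT //; case: ifP.
rewrite ey l2norm_lt //.
by apply: le_lt_trans hN; exact: N2_tail_trunc.
Qed.

Lemma Mop_zero : Mop (fun _ => 0) = fun _ _ => 0.
Proof.
apply: funext => x; have [hx|hx] := pselect (l2 x); last by rewrite Mop_nl2.
apply: funext => n; rewrite MopE // /conv big1 ?mulr0 // => j _.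
by rewrite /ub mul0r mul0r.
Qed.

Definition Lc := Num.sqrt K + 1.
Lemma Lc_gt0 : 0 < Lc.
Proof. by rewrite /Lc ltr_wpDl ?sqrtr_ge0. Qed.

Lemma opdist_Mop_lt h g e : l2 h -> l2 g -> 0 < e ->
  l2norm (vsub h g) < e / Lc -> opdist (Mop h) (Mop g) < e.
Proof.
move=> hh hg ep lt; apply: le_lt_trans (opdist_Mop hh hg) _.
have [hv _] := l2_vsub hh hg.
rewrite sqrtrM ?K_ge0 // -l2norm_N2.
have s0 := sqrtr_ge0 K.
apply: (@le_lt_trans _ _ (Num.sqrt K * (e / Lc))).
  by rewrite ler_wpM2l // ltW.
rewrite mulrA ltr_pdivrMr ?Lc_gt0 // /Lc mulrDr mulr1 mulrC ltrDl //.
Qed.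

Lemma small_prod (k n t e : R) : 0 <= k -> 0 <= n -> 0 <= t ->
  t < e ^+ 2 / ((k + 1) * (n + 1)) -> k * t * n < e ^+ 2.
Proof.
move=> k0 n0 t0 lt.
have p : 0 < (k + 1) * (n + 1) by rewrite mulr_gt0 // ltr_wpDl.
rewrite ltr_pdivlMr // in lt.
apply: le_lt_trans lt; nra.
Qed.

Lemma Mop_approx_vec h q : l2 h -> l2 q -> forall e, 0 < e ->
  exists N, l2norm (vsub (Mop h q) (polyop a (tpoly N h) q)) < e.
Proof.
move=> hh hq e ep.
have p : 0 < (K + 1) * (N2 q + 1) by rewrite mulr_gt0 // ltr_wpDl ?K_ge0 ?N2_ge0.
have [N hN] := N2_tail hh (divr_gt0 (exprn_gt0 2 ep) p).
exists N; rewrite polyop_Mop psym_tpoly Mop_vsub l2norm_lt //.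
have hv : l2 (vsub h (trunc N h)) by case: (l2_vsub hh (@l2_trunc N h)).
have [_ le] := Mop_est hv hq; apply: le_lt_trans le _.
apply: (@le_lt_trans _ _ (K * (N2 h - Pn h N) * N2 q)).
  rewrite ler_wpM2r ?N2_ge0 // ler_wpM2l ?K_ge0 //; exact: N2_tail_trunc.
apply: small_prod => //; rewrite ?K_ge0 ?N2_ge0 // subr_ge0; exact: Pn_le_N2.
Qed.

Section Generic.
Variable Hs : set (nat -> C).
Variable A : set (Op R).
Hypothesis hA : forall S, A S <-> exists h, Hs h /\ S = Mop h.
Hypothesis hHl2 : forall h, Hs h -> l2 h.
Hypothesis hlin : forall c h g, Hs h -> Hs g -> Hs (fun n => c * h n + g n).
Hypothesis hzero : Hs (fun _ => 0).
Hypothesis hmul : forall h g, Hs h -> Hs g -> Hs (Mop h g).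
Hypothesis hT : Hs (psym 'X).
Hypothesis hcl : forall x, l2 x ->
  (forall e, 0 < e -> exists y, Hs y /\ l2norm (vsub x y) < e) -> Hs x.

Lemma A_Mop S : A S -> S = Mop (Fe S) /\ Hs (Fe S).
Proof. by case/hA => h [hh ->]; rewrite /Fe Mop_e0. Qed.

Lemma A_good S : A S -> good S.
Proof. by move=> /A_Mop [e /hHl2 hh]; rewrite e; exact: Mop_good. Qed.

Lemma A_of h : Hs h -> A (Mop h) /\ Fe (Mop h) = h.
Proof. by move=> hh; split; [apply/hA; exists h | rewrite /Fe Mop_e0]. Qed.

Lemma A_T : A (Defs.shift a).
Proof. by rewrite shift_Mop; case: (A_of hT). Qed.

Lemma gen_homeo : lin_homeo A Hs (@Fe R).
Proof.
split.
- by [].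
- split; first by move=> S /A_Mop [].
  by move=> x hx; exists (Mop x); exact: A_of.
- move=> S S' hS hS' e.
  by rewrite (proj1 (A_Mop hS)) (proj1 (A_Mop hS')) e.
- move=> S e hS ep; exists e => // S' hS' lt.
  apply: le_lt_trans lt; exact: opdist_e0 (A_good hS) (A_good hS').
- move=> S e hS ep; exists (e / Lc); first by rewrite divr_gt0 ?Lc_gt0.
  move=> S' hS' lt.
  have [e1 h1] := A_Mop hS; have [e2 h2] := A_Mop hS'.
  rewrite e1 [X in opdist _ X]e2.
  by apply: opdist_Mop_lt => //; apply: hHl2.
Qed.

Lemma polyop_inv (M : set (nat -> C)) p q :
  closed_inv_subspace a Hs M -> M q -> M (polyop a p q).
Proof.
case=> MK Mz [Madd Mscal] Minv _ hq.
have hl : l2 q by apply: hHl2; exact: MK.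
have hit : forall i, M (iter i (Defs.shift a) q) by elim=> [|i IH] //=; exact: Minv.
have -> : polyop a p q = fun n => \sum_(i < size p) p`_i * iter i (Defs.shift a) q n.
  by apply: funext => n; rewrite /polyop asboolT.
elim: (size p) => [|m IH].
  by have -> : (fun n => \sum_(i < 0) p`_i * iter i (Defs.shift a) q n) = fun _ => 0
    by apply: funext => n; rewrite big_ord0.
have -> : (fun n => \sum_(i < m.+1) p`_i * iter i (Defs.shift a) q n) =
  fun n => (\sum_(i < m) p`_i * iter i (Defs.shift a) q n) + p`_m * iter m (Defs.shift a) q n.
  by apply: funext => n; rewrite big_ord_recr.
by apply: Madd => //; apply: Mscal.
Qed.

Lemma inv_Mop (M : set (nat -> C)) h q :
  closed_inv_subspace a Hs M -> Hs h -> M q -> M (Mop h q).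
Proof.
move=> hM hh hq; have := hM; case=> MK _ _ _ Mcl.
have hhl := hHl2 hh; have hql : l2 q by apply: hHl2; exact: MK.
apply: Mcl; first by case: (Mop_est hhl hql).
move=> e ep; have [N hN] := Mop_approx_vec hhl hql ep.
by exists (polyop a (tpoly N h) q); split => //; exact: polyop_inv.
Qed.

Lemma gen_lattice : lattice_iso (closed_ideal A) (closed_inv_subspace a Hs) (@Fe R).
Proof.
split.
- move=> J [JA Jz [Jadd Jscal] Jmul Jcl]; split.
  + by move=> _ [S hS <-]; case: (A_Mop (JA S hS)).
  + by exists (fun _ _ => 0).
  + split.
      by move=> _ _ [S hS <-] [S' hS' <-]; exists (fun x n => S x n + S' x n); [exact: Jadd|].
    by move=> c _ [S hS <-]; exists (fun x n => c * S x n); [exact: Jscal|].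
  + move=> _ [S hS <-]; exists (Defs.shift a \o S) => //.
    by case: (Jmul _ _ A_T hS).
  + move=> x hx happ.
    have hsx : Hs x.
      apply: hcl => // e ep; have [_ [[S hS <-] lt]] := happ e ep.
      by exists (Fe S); split => //; case: (A_Mop (JA S hS)).
    have [AS FS] := A_of hsx.
    exists (Mop x) => //; apply: Jcl => // e ep.
    have ep' : 0 < e / Lc by rewrite divr_gt0 ?Lc_gt0.
    have [_ [[Q hQ <-] lt]] := happ _ ep'.
    exists Q; split => //.
    have [eQ hQs] := A_Mop (JA Q hQ); rewrite [in opdist _ Q]eQ.
    by apply: opdist_Mop_lt => //; apply: hHl2.
- move=> M hM; have := hM; case=> MK Mz [Madd Mscal] Minv Mcl.
  exists [set S | A S /\ M (Fe S)]; split; last first.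
    apply/seteqP; split; first by move=> _ [S [_ hS] <-].
    move=> x hx; have [AS FS] := A_of (MK x hx).
    by exists (Mop x) => //; split => //; rewrite FS.
  split.
  + by move=> S [].
  + split; last by [].
    by rewrite -Mop_zero; case: (A_of hzero).
  + split.
      move=> S S' [hS mS] [hS' mS']; split; last by apply: Madd.
      case/hA: hS => h [hh eS]; case/hA: hS' => h' [hh' eS']; subst S S'.
      have -> : (fun x n => Mop h x n + Mop h' x n) = Mop (fun n => 1 * h n + h' n).
        by apply: funext => x; rewrite Mop_linh; apply: funext => n; rewrite mul1r.
      by case: (A_of (hlin 1 hh hh')).
    move=> c S [hS mS]; split; last by apply: Mscal.
    case/hA: hS => h [hh eS]; subst S.
    have -> : (fun x n => c * Mop h x n) = Mop (fun n => c * h n + 0).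
      by apply: funext => x; rewrite Mop_linh Mop_zero; apply: funext => n; rewrite addr0.
    by case: (A_of (hlin c hh hzero)).
  + move=> S Q hS [hQ mQ].
    have [e1 h1] := A_Mop hS; have [e2 h2] := A_Mop hQ.
    have l1 := hHl2 h1; have l2q := hHl2 h2.
    have c1 : S \o Q = Mop (Mop (Fe S) (Fe Q)).
      by rewrite {1}e1 {1}e2 -Mop_comp.
    have c2 : Q \o S = Mop (Mop (Fe Q) (Fe S)).
      by rewrite {1}e1 {1}e2 -Mop_comp.
    split; split.
    * by rewrite c1; case: (A_of (hmul h1 h2)).
    * by rewrite c1 /Fe Mop_e0; apply: (inv_Mop hM).
    * by rewrite c2; case: (A_of (hmul h2 h1)).
    * by rewrite c2 /Fe Mop_e0 Mop_comm //; apply: (inv_Mop hM).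
  + move=> S hS happ; split => //.
    apply: Mcl; first by case: (A_good hS) => g1 _; exact: g1 _ l2_e0.
    move=> e ep; have [Q [[hQ mQ] lt]] := happ e ep.
    exists (Fe Q); split => //.
    by apply: le_lt_trans lt; exact: opdist_e0 (A_good hS) (A_good hQ).
- move=> J1 J2 [J1A _ _ _ _] [J2A _ _ _ _]; split.
    by move=> sub _ [S hS <-]; exists S => //; exact: sub.
  move=> sub S hS.
  have [S' hS' e] : ((@Fe R) @` J2) (Fe S) by apply: sub; exists S.
  have [e1 _] := A_Mop (J1A S hS); have [e2 _] := A_Mop (J2A S' hS').
  by rewrite e1 -e -e2.
Qed.

End Generic.

Lemma part1 : lin_homeo (AT a) (@H1 R) (@Fe R) /\
  lattice_iso (closed_ideal (AT a)) (closed_inv_subspace a (@H1 R)) (@Fe R).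
Proof.
have hA : forall S, AT a S <-> exists h, @H1 R h /\ S = Mop h.
  move=> S; rewrite AT_char; split; case=> h [hh e]; exists h; split => //.
    by apply/H1_char.
  by apply/H1_char.
have hHl2 : forall h, @H1 R h -> l2 h by move=> h /H1_char [].
have hlin : forall c h g, @H1 R h -> @H1 R g -> @H1 R (fun n => c * h n + g n).
  move=> c h g /H1_char [hh h0] /H1_char [hg g0]; apply/H1_char; split.
    by case: (l2_lin c hh hg).
  by rewrite h0 g0 mulr0 addr0.
have hzero : @H1 R (fun _ => 0) by apply/H1_char; split; [exact: l2_0|].
have hmul : forall h g, @H1 R h -> @H1 R g -> @H1 R (Mop h g).
  move=> h g /H1_char [hh h0] /H1_char [hg g0]; apply/H1_char; split.
    by case: (Mop_est hh hg).
  by rewrite MopE // /conv big_ord1 /ub h0 !mul0r mulr0.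
have hT : @H1 R (psym 'X).
  by apply/H1_char; split; [exact: (@l2_psym 'X) | rewrite psym0 coefX].
have hcl : forall x, l2 x ->
    (forall e, 0 < e -> exists y, @H1 R y /\ l2norm (vsub x y) < e) -> @H1 R x.
  move=> x hx happ; apply/H1_char; split => //.
  apply: cabs2_eq0; apply/eqP; rewrite eq_le cabs2_ge0 andbT.
  apply: (@le0_eps _ 1) => // e ep.
  have ep2 : 0 < Num.sqrt e by rewrite sqrtr_gt0.
  have [y [/H1_char [hy y0] lt]] := happ _ ep2.
  have [hv _] := l2_vsub hx hy.
  have e0' : vsub x y 0%N = x 0%N by rewrite /vsub y0 subr0.
  rewrite mul1r -e0'; apply: le_trans (coord_le 0%N hv) _.
  rewrite l2norm_lt // sqr_sqrtr ?ltW // in lt; exact: ltW.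
split.
  exact: (gen_homeo hA hHl2).
exact: (gen_lattice hA hHl2 hlin hzero hmul hT hcl).
Qed.

Lemma part2 : lin_homeo (ATu a) (@l2 R) (@Fe R) /\
  lattice_iso (closed_ideal (ATu a)) (closed_inv_subspace a (@l2 R)) (@Fe R).
Proof.
have hA : forall S, ATu a S <-> exists h, @l2 R h /\ S = Mop h by move=> S; exact: ATu_char.
have hHl2 : forall h, @l2 R h -> l2 h by [].
have hlin : forall c h g, @l2 R h -> @l2 R g -> @l2 R (fun n => c * h n + g n).
  by move=> c h g hh hg; case: (l2_lin c hh hg).
have hzero : @l2 R (fun _ => 0) by exact: l2_0.
have hmul : forall h g, @l2 R h -> @l2 R g -> @l2 R (Mop h g).
  by move=> h g hh hg; case: (Mop_est hh hg).
have hT : @l2 R (psym 'X) by exact: (@l2_psym 'X).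
have hcl : forall x, l2 x ->
    (forall e, 0 < e -> exists y, @l2 R y /\ l2norm (vsub x y) < e) -> @l2 R x by [].
split.
  exact: (gen_homeo hA hHl2).
exact: (gen_lattice hA hHl2 hlin hzero hmul hT hcl).
Qed.
End WS.

Theorem mainTheorem11 (R : realType) (a : nat -> R[i]) :
  (forall n, a n != 0) ->
  (forall n, cabs (a n.+1) <= cabs (a n)) ->
  l2 a ->
  (lin_homeo (AT a) (@H1 R) (@Fe R) /\
   lattice_iso (closed_ideal (AT a)) (closed_inv_subspace a (@H1 R)) (@Fe R)) /\
  (lin_homeo (ATu a) (@l2 R) (@Fe R) /\
   lattice_iso (closed_ideal (ATu a)) (closed_inv_subspace a (@l2 R)) (@Fe R)).
Proof.
move=> ha hdec hl2; split; [exact: part1 | exact: part2].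
Qed.
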